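(* There are no linear first syzygies on $(I_{W_d})_2$.
   Context: Let $P_d$ be a convex polygon with $d\ge 4$ vertices $v_1,\dots,v_d$ over a field $\mathbb{K}$ with no three edge lines concurrent. With ${\bf v}_i=(v_i,1)$, $\alpha_j=|{\bf v}_{j-1}\,{\bf v}_j\,{\bf v}_{j+1}|$, $\ell_j=|{\bf v}_j\,{\bf v}_{j+1}\,{\bf p}|$, ${\bf p}=(x,y,z)$, $b_i=\alpha_i\prod_{j\ne i-1,i}\ell_j$, the Wachspress surface $W_d$ is the closure of the image of $p\mapsto(b_1,\dots,b_d)$, and $(I_{W_d})_2$ is the space of quadrics in $S=\mathbb{K}[x_1,\ldots,x_d]$ vanishing on $W_d$. *)

(* Defs.v *)
From HB Require Import structures.
From mathcomp Require Import all_boot all_order all_algebra.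
From mathcomp Require Import mpoly.
Set Implicit Arguments. Unset Strict Implicit. Unset Printing Implicit Defensive.
Import Order.TTheory GRing.Theory Num.Theory.
Local Open Scope ring_scope.

Section Wachspress.
Variable R : realFieldType.
Variable d : nat.
(* vertices v_1..v_d indexed cyclically by 'I_d *)
Variable v : 'I_d -> R * R.

Definition coord3 (a : R * R * R) (j : 'I_3) : R :=
  if val j == 0%N then a.1.1 else if val j == 1%N then a.1.2 else a.2.

Definition det3 (a b c : R * R * R) : R :=
  \det (\matrix_(i < 3, j < 3)
          (if val i == 0%N then coord3 a j
           else if val i == 1%N then coord3 b j else coord3 c j)).

Definition bv (i : 'I_d) : R * R * R := ((v i).1, (v i).2, 1).

Definition alpha (j : 'I_d) : R := det3 (bv (ord_pred j)) (bv j) (bv (ordS j)).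

Definition ell (j : 'I_d) (p : R * R * R) : R := det3 (bv j) (bv (ordS j)) p.

Definition wb (i : 'I_d) (p : R * R * R) : R :=
  alpha i * \prod_(j < d | (j != ord_pred i) && (j != i)) ell j p.

(* strictly convex polygon, vertices listed in cyclic order (either orientation) *)
Definition convex_polygon : Prop :=
  (forall i j : 'I_d, j != i -> j != ordS i -> 0 < det3 (bv i) (bv (ordS i)) (bv j))
  \/ (forall i j : 'I_d, j != i -> j != ordS i -> det3 (bv i) (bv (ordS i)) (bv j) < 0).

(* no three (distinct) edge lines pass through a common point of P^2 *)
Definition no_three_edge_lines_concurrent : Prop :=
  forall i j k : 'I_d, i != j -> j != k -> i != k ->
    forall p : R * R * R, ell i p = 0 -> ell j p = 0 -> ell k p = 0 -> p = (0, 0, 0).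

(* (I_{W_d})_2 : quadrics in S = K[x_1..x_d] vanishing on the image of p |-> (b_1(p),..,b_d(p)),
   hence on its closure W_d *)
Definition in_IW2 (q : {mpoly R[d]}) : Prop :=
  q \is 2.-homog /\ forall p : R * R * R, q.@[fun i => wb i p] = 0.

End Wachspress.

(* Main.v *)
Require Import Defs.
From HB Require Import structures.
From mathcomp Require Import all_boot all_order all_algebra.
From mathcomp Require Import mpoly.
From mathcomp Require Import ring lra zify.
Set Implicit Arguments. Unset Strict Implicit. Unset Printing Implicit Defensive.
Import Order.TTheory GRing.Theory Num.Theory.
Local Open Scope ring_scope.


Lemma det3E (R : realFieldType) (a b c : R * R * R) :
  det3 a b c = a.1.1 * (b.1.2 * c.2 - b.2 * c.1.2)
             - a.1.2 * (b.1.1 * c.2 - b.2 * c.1.1)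
             + a.2 * (b.1.1 * c.1.2 - b.1.2 * c.1.1).
Proof.
rewrite /det3 (expand_det_row _ ord0) !big_ord_recl big_ord0.
rewrite /cofactor !(expand_det_row _ ord0) !big_ord_recl !big_ord0 /cofactor.
rewrite !det_mx11 !mxE /= /coord3 /= /bump /=; ring.
Qed.

Lemma ordS_val d (i : 'I_d) : nat_of_ord (ordS i) = (if i.+1 == d then 0 else i.+1)%N.
Proof.
rewrite /ordS /=; case: eqP => [->|ne]; first exact: modnn.
apply: modn_small; have := ltn_ord i; lia.
Qed.

Lemma ord_pred_val d (i : 'I_d) :
  nat_of_ord (ord_pred i) = (if nat_of_ord i == 0%N then d.-1 else (nat_of_ord i).-1)%N.
Proof.
rewrite /ord_pred /=; have := ltn_ord i; case: eqP => [->|ne] hi.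
  by rewrite add0n modn_small //; lia.
have -> : ((i + d).-1 = i.-1 + d)%N by lia.
by rewrite modnDr modn_small //; lia.
Qed.

Definition lc (R : realFieldType) (a : R) (p : R * R * R) (b : R) (q : R * R * R)
  : R * R * R := (a * p.1.1 + b * q.1.1, a * p.1.2 + b * q.1.2, a * p.2 + b * q.2).

Lemma ell_lc (R : realFieldType) d (v : 'I_d -> R * R) j a p b q :
  ell v j (lc a p b q) = a * ell v j p + b * ell v j q.
Proof. rewrite /ell !det3E /lc /=; ring. Qed.

Lemma ell_self (R : realFieldType) d (v : 'I_d -> R * R) j :
  ell v j (bv v j) = 0.
Proof. rewrite /ell !det3E /=; ring. Qed.

Lemma ell_selfS (R : realFieldType) d (v : 'I_d -> R * R) j :
  ell v j (bv v (ordS j)) = 0.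
Proof. rewrite /ell !det3E /=; ring. Qed.


Ltac idxs := rewrite ?ordS_val ?ord_pred_val; (repeat case: ifP); move=> *; lia.

Section Idx.
Variable d : nat.
Hypothesis hd : (4 <= d)%N.

Lemma nS (i : 'I_d) : ordS i != i.
Proof. move: (ltn_ord i) => ?; apply/negP => /eqP /(congr1 (@nat_of_ord d)); idxs. Qed.
Lemma nP (i : 'I_d) : ord_pred i != i.
Proof. move: (ltn_ord i) => ?; apply/negP => /eqP /(congr1 (@nat_of_ord d)); idxs. Qed.
Lemma nSP (i : 'I_d) : ordS i != ord_pred i.
Proof. move: (ltn_ord i) => ?; apply/negP => /eqP /(congr1 (@nat_of_ord d)); idxs. Qed.
Lemma nSS (i : 'I_d) : ordS (ordS i) != i.
Proof. move: (ltn_ord i) => ?; apply/negP => /eqP /(congr1 (@nat_of_ord d)); idxs. Qed.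
End Idx.


Section QF.
Variable R : realFieldType.
Variable d : nat.
Implicit Types (q : {mpoly R[d]}).

Definition cf q (a b : 'I_d) := q@_(U_(a) + U_(b))%MM.
Definition wt (a b : 'I_d) : R := if a == b then 1 else 2^-1.
Definition qf q (y : 'I_d -> R) :=
  \sum_a \sum_b wt a b * cf q a b * (y a * y b).

Lemma cfC q a b : cf q a b = cf q b a. Proof. by rewrite /cf addmC. Qed.

Lemma sum1 (f : 'I_d -> R) a : (forall i, i != a -> f i = 0) -> \sum_i f i = f a.
Proof. by move=> h; rewrite (bigD1 a) //= big1 ?addr0. Qed.

Lemma sum_supp (f : 'I_d -> R) (s : seq 'I_d) : uniq s ->
  (forall i, i \notin s -> f i = 0) -> \sum_i f i = \sum_(i <- s) f i.
Proof.
move=> us h; symmetry; rewrite big_uniq // [X in _ = X](bigID (mem s)) /= [X in _ + X]big1 ?addr0 //.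
Qed.

Lemma mdeg2P (m : 'X_{1..d}) : mdeg m = 2%N -> exists a b, m = (U_(a) + U_(b))%MM.
Proof.
move=> hm.
have [a ha] : exists a, (0 < m a)%N.
  apply/existsP; apply: contraTT (isT : true) => /existsPn h.
  have : mdeg m = 0%N by rewrite mdegE big1 // => i _; move: (h i); case: (m i).
  by rewrite hm.
have le : (U_(a) <= m)%MM.
  by apply/mnm_lepP => i; rewrite mnm1E; case: eqP => [<-|] //.
have e : m = ((m - U_(a)) + U_(a))%MM by rewrite submK.
have : mdeg (m - U_(a))%MM == 1%N.
  by move: hm; rewrite {1}e mdegD mdeg1 => ?; apply/eqP; lia.
case/mdeg1P => b /eqP hb; exists b, a; by rewrite e hb.
Qed.

Lemma mevalU2 (x : 'I_d -> R) a b :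
  \prod_i x i ^+ (U_(a) + U_(b))%MM i = x a * x b.
Proof.
under eq_bigr do rewrite mnmDE exprD.
rewrite big_split /=; congr (_ * _).
  rewrite (bigD1 a) //= mnm1E eqxx expr1 big1 ?mulr1 // => i ia.
  by rewrite mnm1E eq_sym (negbTE ia) expr0.
rewrite (bigD1 b) //= mnm1E eqxx expr1 big1 ?mulr1 // => i ia.
by rewrite mnm1E eq_sym (negbTE ia) expr0.
Qed.

Lemma U2_eq (a b c e : 'I_d) :
  ((U_(a) + U_(b))%MM == (U_(c) + U_(e))%MM) =
  ((a == c) && (b == e)) || ((a == e) && (b == c)).
Proof.
apply/idP/idP.
  move/eqP => h.
  have := congr1 (fun m : 'X_{1..d} => m a) h; rewrite !mnmDE !mnm1E eqxx /=.
  case: (c =P a) => [ca|nca].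
    subst c; have hbe : b = e by apply/eqP; rewrite -eq_mnm1; apply/eqP; exact: (addmI h).
    by move=> _; rewrite hbe !eqxx.
  case: (e =P a) => [ea|nea] /=; last by case: (b == a).
  subst e; have h' : (U_(a) + U_(b) = U_(a) + U_(c))%MM by rewrite h addmC.
  have hbc : b = c by apply/eqP; rewrite -eq_mnm1; apply/eqP; exact: (addmI h').
  by move=> _; rewrite hbc !eqxx orbT.
by case/orP => /andP [/eqP-> /eqP->] //; rewrite addmC.
Qed.

Lemma coef_sum q M : q@_M = \sum_(m <- msupp q) q@_m * (M == m)%:R.
Proof.
case: (boolP (M \in msupp q)) => hM.
  rewrite (big_rem M hM) /= eqxx mulr1 big1_seq ?addr0 // => m /andP[_ hm].
  move: hm; rewrite mem_rem_uniq ?msupp_uniq // inE => /andP [hmM _].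
  by rewrite eq_sym (negbTE hmM) mulr0.
rewrite memN_msupp_eq0 // big1_seq // => m /andP[_ hm].
case: eqP => [eM|]; last by rewrite mulr0.
by rewrite eM hm in hM.
Qed.

Lemma dsum_U2 (x : 'I_d -> R) a0 b0 :
  \sum_a \sum_b (wt a b * ((U_(a) + U_(b))%MM == (U_(a0) + U_(b0))%MM)%:R * (x a * x b))
  = x a0 * x b0.
Proof.
case: (a0 =P b0) => [<-|nab].
  rewrite (sum1 (a := a0)) => [|a ha]; last first.
    by apply: big1 => b _; rewrite U2_eq (negbTE ha) /= mulr0 mul0r.
  rewrite (sum1 (a := a0)) => [|b hb]; last first.
    by rewrite U2_eq (negbTE hb) andbF /= mulr0 mul0r.
  by rewrite /wt !eqxx /= !mul1r.
have nab' : a0 != b0 by apply/eqP.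
rewrite (sum_supp (s := [:: a0; b0])) ?big_cons ?big_nil ?addr0; first last.
- move=> a; rewrite !inE negb_or => /andP [h1 h2]; apply: big1 => b _.
  by rewrite U2_eq (negbTE h1) (negbTE h2) /= mulr0 mul0r.
- by rewrite /= inE nab'.
rewrite (sum1 (a := b0)) => [|b hb]; last first.
  by rewrite U2_eq (negbTE hb) eqxx (negbTE nab') /= mulr0 mul0r.
rewrite (sum1 (a := a0)) => [|b hb]; last first.
  by rewrite U2_eq (negbTE hb) eq_sym (negbTE nab') /= andbF mulr0 mul0r.
rewrite /wt (negbTE nab') eqxx [(U_(b0) + _)%MM]addmC eqxx.
have -> : (b0 == a0) = false by rewrite eq_sym (negbTE nab').
by rewrite /=; field.
Qed.

Lemma qformE q x : q \is 2.-homog -> q.@[x] = qf q x.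
Proof.
move=> hq; rewrite mevalE /qf.
transitivity (\sum_(m <- msupp q) q@_m *
   \sum_a \sum_b (wt a b * ((U_(a) + U_(b))%MM == m)%:R * (x a * x b))).
  apply: eq_big_seq => m hm; congr (_ * _).
  have [a [b ->]] := mdeg2P (dhomog_mf hq hm).
  by rewrite mevalU2 dsum_U2.
rewrite /cf.
under [RHS]eq_bigr => a _ do under eq_bigr => b _ do rewrite coef_sum.
rewrite (eq_bigr (fun m => \sum_a \sum_b q@_m *
    (wt a b * ((U_(a) + U_(b))%MM == m)%:R * (x a * x b)))); last first.
  by move=> m _; rewrite mulr_sumr; apply: eq_bigr => a _; rewrite mulr_sumr.
rewrite exchange_big /=; apply: eq_bigr => a _.
rewrite exchange_big /=; apply: eq_bigr => b _.
rewrite mulr_sumr mulr_suml; apply: eq_bigr => m _.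
ring.
Qed.

Lemma qf_supp q y (s : seq 'I_d) : uniq s -> (forall i, i \notin s -> y i = 0) ->
  qf q y = \sum_(a <- s) \sum_(b <- s) wt a b * cf q a b * (y a * y b).
Proof.
move=> us h; rewrite /qf (sum_supp us) => [|a ha]; last first.
  by apply: big1 => b _; rewrite h // mul0r mulr0.
apply: eq_bigr => a _; apply: sum_supp => // b hb.
by rewrite (h b hb) mulr0 mulr0.
Qed.

Lemma qf1 q y a : (forall i, i != a -> y i = 0) -> qf q y = cf q a a * (y a * y a).
Proof.
move=> h; rewrite (@qf_supp q y [:: a]) // ?big_cons ?big_nil ?addr0.
  by rewrite /wt eqxx mul1r.
by move=> i; rewrite inE => /h.
Qed.

Lemma qf2 q y a c : a != c -> (forall i, i != a -> i != c -> y i = 0) ->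
  qf q y = cf q a a * (y a * y a) + cf q a c * (y a * y c) + cf q c c * (y c * y c).
Proof.
move=> ac h; rewrite (@qf_supp q y [:: a; c]) ?big_cons ?big_nil ?addr0.
- by rewrite /wt !eqxx (negbTE ac) eq_sym (negbTE ac) (cfC q c a); field.
- by rewrite /= ?inE ac.
- by move=> i; rewrite !inE negb_or => /andP [h1 h2]; apply: h.
Qed.

Lemma poly_eq0_nz (p : {poly R}) : (forall x, x != 0 -> p.[x] = 0) -> p = 0.
Proof.
move=> h; apply: (roots_geq_poly_eq0 (rs := [seq (i.+1)%:R | i <- iota 0 (size p)])).
- by apply/allP => x /mapP [i _ ->]; apply/rootP/h; rewrite pnatr_eq0.
- rewrite map_inj_uniq ?iota_uniq // => i j /eqP; rewrite eqr_nat => /eqP [].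
  done.
- by rewrite size_map size_iota.
Qed.

Lemma homog1E (p : {mpoly R[d]}) : p \is 1.-homog ->
  p = \sum_e p@_(U_(e)) *: 'X_e.
Proof.
move=> hp; apply/mpolyP => m; rewrite (raddf_sum (mcoeff m)) /=.
under eq_bigr do rewrite mcoeffZ mcoeffX.
case: (boolP (mdeg m == 1%N)) => [/mdeg1P [e /eqP ->]|hm].
  rewrite (sum1 (a := e)) ?eqxx ?mulr1 // => i ie.
  by rewrite eq_mnm1 (negbTE ie) mulr0.
rewrite (dhomog_nemf_coeff hp hm) big1 // => e _.
case: eqP => [he|]; last by rewrite mulr0.
by move: hm; rewrite -he mdeg1.
Qed.

Lemma coefXM1 (p : {mpoly R[d]}) e m : ('X_e * p)@_(U_(e) + m)%MM = p@_m.
Proof. by rewrite mulrC mcoeffMX. Qed.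

Lemma coefXM0 (p : {mpoly R[d]}) e (M : 'X_{1..d}) : M e = 0%N -> ('X_e * p)@_M = 0.
Proof.
move=> hM; rewrite {1}[p]mpolyE mulr_sumr (raddf_sum (mcoeff M)) /=.
apply: big1 => m _; rewrite -scalerAr -mpolyXD mcoeffZ mcoeffX.
case: eqP => [he|]; last by rewrite mulr0.
by move: hM; rewrite -he mnmDE mnm1E eqxx.
Qed.
End QF.


Section Geo.
Variable R : realFieldType.
Variable d : nat.
Variable v : 'I_d -> R * R.
Hypothesis hd : (4 <= d)%N.
Hypothesis hconv : convex_polygon v.
Hypothesis hnc : no_three_edge_lines_concurrent v.

Local Notation ell := (ell v).
Local Notation bv := (bv v).
Local Notation wb := (wb v).
Local Notation S := (@ordS d).
Local Notation P := (@ord_pred d).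

Lemma nPP (i : 'I_d) : P (P i) != i.
Proof. move: (ltn_ord i) => ?; apply/negP => /eqP /(congr1 (@nat_of_ord d)); idxs. Qed.

Lemma sgn_ex : exists sg : R, sg * sg = 1 /\
  (forall i j, 0 <= sg * ell i (bv j)) /\
  (forall i j, j != i -> j != S i -> 0 < sg * ell i (bv j)).
Proof.
have H0 : forall i j, (j == i) || (j == S i) -> ell i (bv j) = 0.
  by move=> i j /orP [] /eqP ->; rewrite ?ell_self ?ell_selfS.
case: hconv => h; [exists 1 | exists (-1)]; (split; first by rewrite ?mul1r ?mulN1r ?opprK);
  split => i j.
- case: (boolP ((j == i) || (j == S i))) => [/H0 ->|]; first by rewrite mulr0.
  by rewrite negb_or => /andP [h1 h2]; rewrite mul1r; apply/ltW/h.
- by rewrite mul1r => h1 h2; apply: h.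
- case: (boolP ((j == i) || (j == S i))) => [/H0 ->|]; first by rewrite mulr0.
  by rewrite negb_or => /andP [h1 h2]; rewrite mulN1r oppr_ge0; apply/ltW/h.
- by rewrite mulN1r oppr_gt0 => h1 h2; apply: h.
Qed.

Lemma ell_bv_neq0 i j : j != i -> j != S i -> ell i (bv j) != 0.
Proof.
move=> h1 h2; have [sg [_ [_ h]]] := sgn_ex.
by have := h i j h1 h2; apply: contraTneq => ->; rewrite mulr0 ltxx.
Qed.

Lemma ell_sum_neq0 m x z : ell m (bv x) != 0 ->
  ell m (lc 1 (bv x) 1 (bv z)) != 0 /\ ell m (lc 1 (bv z) 1 (bv x)) != 0.
Proof.
move=> hx; have [sg [s2 [hge _]]] := sgn_ex.
have hx' : 0 < sg * ell m (bv x).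
  rewrite lt_def hge andbT mulf_neq0 //.
  by apply/eqP => s0; move: s2; rewrite s0 mul0r => /eqP; rewrite eq_sym oner_eq0.
have hz := hge m z.
move: hx' hz; set a := sg * ell m (bv x); set b := sg * ell m (bv z) => ha hb.
have key : forall t1 t2, t1 + t2 = ell m (bv x) + ell m (bv z) -> t1 + t2 != 0.
  move=> t1 t2 -> ; apply/eqP => e.
  have : a + b = 0 by rewrite /a /b -mulrDr e mulr0.
  lra.
by rewrite !ell_lc !mul1r; split; apply: key; rewrite // addrC.
Qed.

Lemma alpha_neq0 i : alpha v i != 0.
Proof.
rewrite /alpha -{2}(ord_predK i); apply: ell_bv_neq0; first exact: nSP.
by rewrite ord_predK nS.
Qed.

Lemma wb_zero i p m : m != P i -> m != i -> ell m p = 0 -> wb i p = 0.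
Proof.
move=> h1 h2 h3; rewrite /wb (bigD1 m) /=; last by rewrite h1 h2.
by rewrite h3 mul0r mulr0.
Qed.

Lemma wb_neq0 i p : (forall m, m != P i -> m != i -> ell m p != 0) -> wb i p != 0.
Proof.
move=> h; rewrite /wb mulf_neq0 ?alpha_neq0 //.
by apply/prodf_neq0 => m /andP [h1 h2]; apply: h.
Qed.

Lemma wb_vertex_zero i a : i != a -> wb i (bv a) = 0.
Proof.
move=> ia; case: (a =P P i) => [ha|/eqP ha].
  apply: (@wb_zero _ _ (P a)).
  - by rewrite ha (inj_eq (@ord_pred_inj d)) nP.
  - by rewrite ha nPP.
  - by rewrite -{2}(ord_predK a) ell_selfS.
apply: (@wb_zero _ _ a) => //; first by rewrite eq_sym.
exact: ell_self.
Qed.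

Lemma wb_vertex_neq0 a : wb a (bv a) != 0.
Proof.
apply: wb_neq0 => m h1 h2; apply: ell_bv_neq0; first by rewrite eq_sym.
by apply: contra h1 => /eqP ->; rewrite ordSK.
Qed.

Definition pe a := lc 1 (bv a) 1 (bv (S a)).

Lemma pe_ell_neq0 m a : m != a -> ell m (pe a) != 0.
Proof.
move=> ma; case: (a =P S m) => [am|/eqP am].
  have : ell m (bv (S a)) != 0.
    apply: ell_bv_neq0; first by rewrite am nSS.
    by rewrite (inj_eq (@ordS_inj d)) eq_sym.
  by case/(@ell_sum_neq0 m (S a) a).
have : ell m (bv a) != 0 by apply: ell_bv_neq0; rewrite // eq_sym.
by case/(@ell_sum_neq0 m a (S a)).
Qed.

Lemma cf_diag q a : in_IW2 v q -> cf q a a = 0.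
Proof.
case=> hq hz; move: (hz (bv a)); rewrite qformE // (@qf1 _ _ q _ a); last first.
  by move=> i ia; apply: wb_vertex_zero.
move/eqP; rewrite mulf_eq0 => /orP [/eqP //|].
by rewrite mulf_eq0 orbb (negbTE (wb_vertex_neq0 a)).
Qed.

Lemma cf_adj q a : in_IW2 v q -> cf q a (S a) = 0.
Proof.
move=> hI; have [hq hz] := hI; move: (hz (pe a)).
rewrite qformE // (@qf2 _ _ q _ a (S a)); first last.
- move=> i h1 h2; apply: (@wb_zero _ _ a).
  + by apply: contra h2 => /eqP ->; rewrite ord_predK.
  + by rewrite eq_sym.
  + by rewrite /pe ell_lc ell_self ell_selfS !mulr0 addr0.
- by rewrite eq_sym nS.
rewrite !cf_diag // !mul0r add0r addr0 => /eqP.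
have w1 : wb a (pe a) != 0.
  by apply: wb_neq0 => m h1 h2; apply: pe_ell_neq0.
have w2 : wb (S a) (pe a) != 0.
  by apply: wb_neq0 => m h1 h2; apply: pe_ell_neq0; rewrite ordSK in h1.
rewrite mulf_eq0 => /orP [/eqP //|].
by rewrite mulf_eq0 (negbTE w1) (negbTE w2).
Qed.

Lemma prod2 (g : 'I_d -> R) a c : a != c -> (forall i, i != a -> i != c -> g i = 1) ->
  \prod_i g i = g a * g c.
Proof.
move=> ac h; rewrite (bigD1 a) //= (bigD1 c) /=; last by rewrite eq_sym.
rewrite big1 ?mulr1 //.
by move=> i /andP [h1 h2]; apply: h.
Qed.

Lemma qf_scale q (y : 'I_d -> R) c : qf q (fun i => c * y i) = c ^+ 2 * qf q y.
Proof.
rewrite /qf mulr_sumr; apply: eq_bigr => a _; rewrite mulr_sumr; apply: eq_bigr => b _.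
ring.
Qed.

Section Cross.
Variables j k : 'I_d.
Hypothesis kj1 : k != P j.
Hypothesis kj2 : k != j.
Hypothesis kj3 : k != S j.

Let jk : j != k. Proof. by rewrite eq_sym. Qed.
Let jSk : j != S k. Proof. by apply: contra kj1 => /eqP ->; rewrite ordSK. Qed.
Let jPk : j != P k. Proof. by apply: contra kj3 => /eqP ->; rewrite ord_predK. Qed.
Let Sjk : S j != k. Proof. by rewrite eq_sym. Qed.
Let SjSk : S j != S k. Proof. by rewrite (inj_eq (@ordS_inj d)). Qed.
Let jSj : j != S j. Proof. by rewrite eq_sym nS. Qed.
Let kSk : k != S k. Proof. by rewrite eq_sym nS. Qed.

Let A := ell k (bv (S j)).
Let B := ell k (bv j).
Definition Pt := lc A (bv j) (- B) (bv (S j)).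
Definition Dv := lc 1 (bv j) 1 (bv k).

Lemma ellj_Pt : ell j Pt = 0.
Proof. by rewrite /Pt ell_lc ell_self ell_selfS !mulr0 addr0. Qed.
Lemma ellk_Pt : ell k Pt = 0.
Proof. rewrite /Pt ell_lc -/A -/B; ring. Qed.

Lemma Pt_nz : Pt <> ((0 : R), (0 : R), (0 : R)).
Proof.
have hA : A != 0 by apply: ell_bv_neq0.
rewrite /Pt /lc => [[e1 e2 e3]].
rewrite /Defs.bv /= in e1 e2 e3.
have eAB : A = B by move: e3; rewrite !mulr1 => /eqP; rewrite subr_eq0 => /eqP.
rewrite -eAB in e1 e2.
have h1 : (v j).1 = (v (S j)).1.
  apply/eqP; rewrite -subr_eq0; apply/eqP; apply: (mulfI hA); rewrite mulr0 -e1; ring.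
have h2 : (v j).2 = (v (S j)).2.
  apply/eqP; rewrite -subr_eq0; apply/eqP; apply: (mulfI hA); rewrite mulr0 -e2; ring.
have hb : bv j = bv (S j) by rewrite /Defs.bv h1 h2.
have : ell (P j) (bv (S j)) != 0.
  apply: ell_bv_neq0; first exact: nSP.
  by rewrite ord_predK nS.
by rewrite -hb -{2}(ord_predK j) ell_selfS eqxx.
Qed.

Lemma ell_Pt_neq0 m : m != j -> m != k -> ell m Pt != 0.
Proof.
move=> mj mk; apply/eqP => e; apply: Pt_nz.
apply: (hnc jk _ _ ellj_Pt ellk_Pt e); by rewrite eq_sym.
Qed.

Lemma ellj_D : ell j Dv != 0.
Proof.
by rewrite /Dv ell_lc ell_self mulr0 add0r mul1r; apply: ell_bv_neq0.
Qed.

Lemma ellk_D : ell k Dv != 0.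
Proof.
by rewrite /Dv ell_lc ell_self mulr0 addr0 mul1r; apply: ell_bv_neq0.
Qed.


Definition pt x := lc 1 Pt x Dv.
Definition isJK m := (m == j) || (m == k).
Definition hp m : {poly R} :=
  if isJK m then (ell m Dv)%:P else (ell m Pt)%:P + (ell m Dv) *: 'X.

Lemma ell_pt m x : ell m (pt x) = (if isJK m then x else 1) * (hp m).[x].
Proof.
rewrite /pt ell_lc mul1r /hp /isJK; case: (boolP ((m == j) || (m == k))) => [/orP [] /eqP ->|_].
- by rewrite ellj_Pt hornerC add0r.
- by rewrite ellk_Pt hornerC add0r.
- rewrite hornerD hornerC hornerZ hornerX; ring.
Qed.

Definition cj i := (j != P i) && (j != i).
Definition ck i := (k != P i) && (k != i).

Lemma prod_if i (x : R) : \prod_(m | (m != P i) && (m != i)) (if isJK m then x else 1) =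
  (if cj i then x else 1) * (if ck i then x else 1).
Proof.
rewrite big_mkcond /= (@prod2 _ j k) //.
  by rewrite /isJK !eqxx orbT.
by move=> m h1 h2; rewrite /isJK (negbTE h1) (negbTE h2); case: ifP.
Qed.

Definition Fp i : {poly R} := alpha v i *:
  ((if cj i && ck i then 'X else 1%:P) * \prod_(m | (m != P i) && (m != i)) hp m).

Lemma cjck i : cj i || ck i.
Proof.
rewrite /cj /ck; apply: contraT; rewrite negb_or !negb_and !negbK => /andP [hj hk].
case/orP: hj => /eqP ej; case/orP: hk => /eqP ek.
- by move: kj2; rewrite ek ej eqxx.
- by move: kj3; rewrite ek ej ord_predK eqxx.
- by move: kj1; rewrite ek ej eqxx.
- by move: kj2; rewrite ek ej eqxx.
Qed.

Lemma wb_pt i x : wb i (pt x) = x * (Fp i).[x].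
Proof.
rewrite /Defs.wb /Fp hornerZ hornerM horner_prod.
rewrite (eq_bigr (fun m => (if isJK m then x else 1) * (hp m).[x])); last by move=> m _; apply: ell_pt.
rewrite big_split /= prod_if.
have := cjck i; case: (cj i); case: (ck i) => //= _; rewrite ?hornerX ?hornerC; ring.
Qed.

Lemma hp0 m : (hp m).[0] != 0.
Proof.
rewrite /hp /isJK; case: (boolP ((m == j) || (m == k))) => [/orP [] /eqP ->|].
- by rewrite hornerC; apply: ellj_D.
- by rewrite hornerC; apply: ellk_D.
rewrite negb_or => /andP [h1 h2].
by rewrite hornerD hornerC hornerZ hornerX mulr0 addr0; apply: ell_Pt_neq0.
Qed.

Lemma Fp0 i : (Fp i).[0] = alpha v i *
   ((if cj i && ck i then 0 else 1) * \prod_(m | (m != P i) && (m != i)) (hp m).[0]).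
Proof.
by rewrite /Fp hornerZ hornerM horner_prod; case: ifP => _; rewrite ?hornerX ?hornerC.
Qed.

Lemma Fp0_nz i : ~~ (cj i && ck i) -> (Fp i).[0] != 0.
Proof.
move=> h; rewrite Fp0 (negbTE h) mul1r mulf_neq0 ?alpha_neq0 //.
by apply/prodf_neq0 => m _; apply: hp0.
Qed.

Lemma Fp0_z i : cj i && ck i -> (Fp i).[0] = 0.
Proof. by move=> h; rewrite Fp0 h mul0r mulr0. Qed.

Lemma qf_eq q (y y' : 'I_d -> R) : y =1 y' -> qf q y = qf q y'.
Proof.
by move=> e; rewrite /qf; apply: eq_bigr => a _; apply: eq_bigr => b _; rewrite !e.
Qed.

Lemma cross q : in_IW2 v q -> exists y : 'I_d -> R,
  [/\ y j != 0, y (S j) != 0, y k != 0, y (S k) != 0 &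
   cf q j k * (y j * y k) + cf q j (S k) * (y j * y (S k)) +
   cf q (S j) k * (y (S j) * y k) + cf q (S j) (S k) * (y (S j) * y (S k)) = 0].
Proof.
move=> hI; have [hq hz] := hI.
pose G := \sum_a \sum_b (@wt R d a b * cf q a b) *: (Fp a * Fp b).
have hG : forall x, G.[x] = qf q (fun i => (Fp i).[x]).
  move=> x; rewrite /G /qf horner_sum; apply: eq_bigr => a _.
  rewrite horner_sum; apply: eq_bigr => b _.
  by rewrite hornerZ hornerM.
have G0 : G = 0.
  apply: poly_eq0_nz => x hx; rewrite hG.
  have := hz (pt x); rewrite qformE // (@qf_eq q _ (fun i => x * (Fp i).[x])); last first.
    by move=> i; apply: wb_pt.
  rewrite qf_scale => /eqP; rewrite mulf_eq0 expf_eq0 (negbTE hx) andbF /=.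
  by move/eqP.
have Q0 : qf q (fun i => (Fp i).[0]) = 0 by rewrite -hG G0 horner0.
pose y := fun i => (Fp i).[0].
exists y; split.
- by apply: Fp0_nz; rewrite /cj eqxx andbF.
- by apply: Fp0_nz; rewrite /cj ordSK eqxx.
- by apply: Fp0_nz; rewrite /ck eqxx !andbF.
- by apply: Fp0_nz; rewrite /ck ordSK eqxx !andbF.
have nz : forall i, i \notin [:: j; S j; k; S k] -> y i = 0.
  move=> i; rewrite !inE !negb_or => /and4P [h1 h2 h3 h4].
  apply: Fp0_z; rewrite /cj /ck.
  have e1 : j != P i by apply: contra h2 => /eqP ->; rewrite ord_predK.
  have e2 : k != P i by apply: contra h4 => /eqP ->; rewrite ord_predK.
  by rewrite e1 e2 /= ![_ == i]eq_sym h1 h3.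
have uq : uniq [:: j; S j; k; S k].
  by rewrite /= !inE !negb_or jSj jk jSk Sjk SjSk kSk.
move: Q0; rewrite (@qf_supp _ _ q y [:: j; S j; k; S k]) // !big_cons big_nil.
rewrite ?big_cons ?big_nil ?addr0.
have f1 : (S j == j) = false by rewrite eq_sym (negbTE jSj).
have f2 : (k == j) = false by rewrite eq_sym (negbTE jk).
have f3 : (S k == j) = false by rewrite eq_sym (negbTE jSk).
have f4 : (k == S j) = false by rewrite eq_sym (negbTE Sjk).
have f5 : (S k == S j) = false by rewrite eq_sym (negbTE SjSk).
have f6 : (S k == k) = false by rewrite eq_sym (negbTE kSk).
rewrite /wt !eqxx f1 f2 f3 f4 f5 f6 (negbTE jSj) (negbTE jk) (negbTE jSk).
rewrite (negbTE Sjk) (negbTE SjSk) (negbTE kSk).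
rewrite !(cf_diag _ hI) (cfC q (S j) j) (cfC q (S k) k) (cf_adj j hI) (cf_adj k hI).
rewrite (cfC q k j) (cfC q k (S j)) (cfC q (S k) j) (cfC q (S k) (S j)).
by move=> E; rewrite -[X in _ = X]E; field.
Qed.

End Cross.

Lemma iterS_val n (r : 'I_d) : nat_of_ord (iter n S r) = ((r + n) %% d)%N.
Proof.
elim: n => [|n IH]; first by rewrite addn0 modn_small.
rewrite iterS /= IH -addn1 modnDml addn1 addnS //.
Qed.

Lemma iterS_eq (r : 'I_d) m m' : (m < d)%N -> (m' < d)%N ->
  iter m S r = iter m' S r -> m = m'.
Proof.
move=> h h' /(congr1 (@nat_of_ord d)); rewrite !iterS_val => /eqP.
by rewrite eqn_modDl !modn_small // => /eqP.
Qed.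

Lemma iterS_surj (r a : 'I_d) : a = iter ((a + d - r) %% d) S r.
Proof.
apply: ord_inj; rewrite iterS_val modnDmr.
have -> : (r + (a + d - r) = a + d)%N by have := ltn_ord r; lia.
by rewrite modnDr modn_small.
Qed.

Lemma P_iter (r : 'I_d) : P r = iter (d - 1) S r.
Proof.
apply: ord_inj; rewrite iterS_val /=; congr (_ %% _)%N.
have := ltn_ord r; lia.
Qed.

Lemma row_step q r : in_IW2 v q -> (forall a, cf q r a = 0) ->
  forall a, cf q (S r) a = 0.
Proof.
move=> hI hr.
have H : forall t, (t <= d - 3)%N -> cf q (S r) (iter t.+2 S r) = 0.
  elim=> [|t IH] ht; first exact: (cf_adj (S r) hI).
  set kk := iter t.+2 S r.
  have k1 : kk != P r.
    rewrite P_iter; apply/eqP => e; have := iterS_eq _ _ e; lia.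
  have k2 : kk != r.
    apply/eqP => e; have e' : iter t.+2 S r = iter 0 S r by rewrite -/kk e.
    have := iterS_eq _ _ e'; lia.
  have k3 : kk != S r.
    apply/eqP => e; have e' : iter t.+2 S r = iter 1 S r by rewrite -/kk e.
    have := iterS_eq _ _ e'; lia.
  have [y [y1 y2 y3 y4 E]] := cross k1 k2 k3 hI.
  move: E; rewrite !hr !mul0r !add0r IH; last by lia.
  rewrite mul0r add0r => /eqP; rewrite mulf_eq0 mulf_eq0 (negbTE y2) (negbTE y4) /=.
  by rewrite orbF => /eqP.
move=> a; rewrite (iterS_surj r a).
have : ((a + d - r) %% d < d)%N by rewrite ltn_mod; have := ltn_ord r; lia.
case: ((a + d - r) %% d)%N => [_|[_|t ht]].
- by rewrite /= cfC hr.
- exact: (cf_diag (S r) hI).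
- by apply: H; lia.
Qed.

Lemma key q b : in_IW2 v q -> (forall a, cf q b a = 0) -> q = 0.
Proof.
move=> hI hb.
have rows : forall n a, cf q (iter n S b) a = 0.
  by elim => //= n IH; apply: row_step.
have all0 : forall a c, cf q a c = 0 by move=> a c; rewrite (iterS_surj b a); apply: rows.
apply/mpolyP => m; rewrite mcoeff0; case: (boolP (mdeg m == 2%N)) => hm.
  have [a [c ->]] := mdeg2P (eqP hm); exact: all0 a c.
exact: dhomog_nemf_coeff hI.1 hm.
Qed.
End Geo.


Theorem corollary3p9 (R : realFieldType) (d : nat) (v : 'I_d -> R * R) :
  (4 <= d)%N ->
  convex_polygon v ->
  no_three_edge_lines_concurrent v ->
  forall (n : nat) (q : 'I_n -> {mpoly R[d]}),
    (forall k, in_IW2 v (q k)) ->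
    (forall c : 'I_n -> R, \sum_(k < n) c k *: q k = 0 -> forall k, c k = 0) ->
  forall l : 'I_n -> {mpoly R[d]},
    (forall k, l k \is 1.-homog) ->
    \sum_(k < n) l k * q k = 0 ->
    forall k, l k = 0.
Proof.
move=> hd hconv hnc n q hq hind l hl hsum.
suff hb : forall b k, (l k)@_(U_(b)) = 0.
  by move=> k; rewrite (homog1E (hl k)); apply: big1 => e _; rewrite hb scale0r.
move=> b.
pose sg := \sum_(k < n) (l k)@_(U_(b)) *: q k.
have hs : in_IW2 v sg.
  split.
    by apply: rpred_sum => k _; apply: rpredZ; exact: (hq k).1.
  move=> p; rewrite /sg (big_morph (meval _) (@mevalD _ _ _) (@meval0 _ _ _)).
  by apply: big1 => k _; rewrite mevalZ (hq k).2 mulr0.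
apply: hind.
apply: (key hd hconv hnc (b := b) hs) => a.
case: (a =P b) => [->|/eqP ab]; first exact: (cf_diag hd hconv b hs).
pose M := (U_(a) + (U_(b) + U_(b)))%MM.
have HM : forall k, (l k * q k)@_M = (l k)@_(U_(b)) * cf (q k) a b.
  move=> k; rewrite {1}(homog1E (hl k)) mulr_suml (raddf_sum (mcoeff M)) /=.
  under eq_bigr do rewrite -scalerAl mcoeffZ.
  rewrite (@sum_supp _ _ _ [:: a; b]) ?big_cons ?big_nil ?addr0; first last.
  - move=> e; rewrite !inE negb_or => /andP [h1 h2].
    rewrite coefXM0 ?mulr0 // /M !mnmDE !mnm1E.
    by rewrite eq_sym (negbTE h1) eq_sym (negbTE h2).
  - by rewrite /= inE andbT.
  - rewrite /M coefXM1 -/(cf (q k) b b) (cf_diag hd hconv b (hq k)) mulr0 add0r.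
    by rewrite addmA [(U_(a) + U_(b))%MM]addmC -addmA coefXM1.
have := congr1 (mcoeff M) hsum; rewrite mcoeff0 (raddf_sum (mcoeff M)) /=.
under eq_bigr do rewrite HM.
move=> E; rewrite cfC /cf /sg (raddf_sum (mcoeff _)) /=.
by under eq_bigr do rewrite mcoeffZ; exact: E.
Qed.
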